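(* Let $\mathcal S$ be a Garside family in a cancellative category $\mathcal C$. The following are equivalent: (i) For all $f,g\in\mathcal C$ that admit a common right-multiple, there exist $\mathcal S$-normal paths $u,v$ such that the negative–positive path $\overline u\,|\,v$ is symmetric $\mathcal S$-normal and $(f,g)\bowtie([u],[v])$; (ii) $\mathcal C$ admits conditional weak left-lcms.
   Context: A category is cancellative if $fg=fg'\Rightarrow g=g'$ and $gf=g'f\Rightarrow g=g'$. $\mathcal C^\times$ is the family of invertible elements; for $\mathcal S\subseteq\mathcal C$, $\mathcal S^\sharp=\mathcal S\mathcal C^\times\cup\mathcal C^\times$. $f\preccurlyeq g$ means $g=fg'$ for some $g'$. A length-two path $(g_1,g_2)$ is $\mathcal S$-greedy if for all $s\in\mathcal S$ and $f\in\mathcal C$ with $fg_1$ defined, $s\preccurlyeq fg_1g_2$ implies $s\preccurlyeq fg_1$; a path is $\mathcal S$-greedy if all its length-two subpaths are. A path is $\mathcal S$-normal if it is $\mathcal S$-greedy and all its entries lie in $\mathcal S^\sharp$. For a path $u=(s_1,\dots,s_p)$, $[u]$ denotes the product $s_1\cdots s_p$ (an identity-element for an empty path). $\mathcal S$ is a Garside family in $\mathcal C$ if every element of $\mathcal C$ is $[u]$ for some $\mathcal S$-normal path $u$. Two elements $f,g$ with the same source are left-disjoint if whenever $h\preccurlyeq h'f$ and $h\preccurlyeq h'g$, then $h\preccurlyeq h'$. For $\mathcal S$-normal paths $u,v$ with the same source, the path $\overline u\,|\,v$ is symmetric $\mathcal S$-normal if, in case $u$ and $v$ are both nonempty, their first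 entries are left-disjoint. For pairs of elements with common source, $(f,g)\bowtie(f',g')$ means there exist $h,h'$ with $hf=h'f'$ and $hg=h'g'$. An element $h$ is a weak left-lcm of $f,g$ (same target) if $h$ is a common left-multiple of $f$ and $g$ and every common left-multiple of $f$ and $g$ that admits a common left-multiple with $h$ is a left-multiple of $h$. $\mathcal C$ admits conditional weak left-lcms if, whenever $f,g$ admit a common left-multiple $h_0$, they admit a weak left-lcm $h$ such that $h_0$ is a left-multiple of $h$. *)

(* Defs.v *)
(* small categories presented as a type of elements with
   source/target maps and a composition that is meaningful only on
   composable pairs.  Composition is written left-to-right, as in the
   Garside literature: f g is defined iff tgt f = src g. *)
From Stdlib Require Import List.
Import ListNotations.

Record category := Category {
  Ob : Type;
  El : Type;
  src : El -> Ob;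
  tgt : El -> Ob;
  mul : El -> El -> El;
  one : Ob -> El;
  src_one : forall x, src (one x) = x;
  tgt_one : forall x, tgt (one x) = x;
  src_mul : forall f g, tgt f = src g -> src (mul f g) = src f;
  tgt_mul : forall f g, tgt f = src g -> tgt (mul f g) = tgt g;
  one_mul : forall f, mul (one (src f)) f = f;
  mul_one : forall f, mul f (one (tgt f)) = f;
  mulA : forall f g h, tgt f = src g -> tgt g = src h ->
           mul (mul f g) h = mul f (mul g h)
}.

Arguments src {c} _.
Arguments tgt {c} _.
Arguments mul {c} _ _.
Arguments one {c} _.

Section Defs.
Variable C : category.
Local Notation E := (El C) (only parsing).

Definition cancellative : Prop :=
  (forall f g g' : El C, tgt f = src g -> tgt f = src g' -> mul f g = mul f g' -> g = g') /\
  (forall f g g' : El C, tgt g = src f -> tgt g' = src f -> mul g f = mul g' f -> g = g').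

Definition invertible (e : E) : Prop :=
  exists e', tgt e = src e' /\ tgt e' = src e /\
    mul e e' = one (src e) /\ mul e' e = one (tgt e).

Definition sharp (S : E -> Prop) (x : E) : Prop :=
  (exists s e, S s /\ invertible e /\ tgt s = src e /\ x = mul s e) \/ invertible x.

Definition lprefix (f g : E) : Prop :=
  exists g', tgt f = src g' /\ g = mul f g'.

Definition left_multiple (h f : E) : Prop :=
  exists k, tgt k = src f /\ h = mul k f.

(* paths: a source object together with a list of consecutive composable elements *)
Fixpoint path_from (x : Ob C) (u : list E) : Prop :=
  match u with
  | [] => True
  | s :: u' => src s = x /\ path_from (tgt s) u'
  end.

Fixpoint eval (x : Ob C) (u : list E) : E :=
  match u with
  | [] => one x
  | s :: u' => mul s (eval (tgt s) u')
  end.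

Definition greedy2 (S : E -> Prop) (g1 g2 : E) : Prop :=
  forall s f, S s -> tgt f = src g1 ->
    lprefix s (mul (mul f g1) g2) -> lprefix s (mul f g1).

Fixpoint greedy (S : E -> Prop) (u : list E) : Prop :=
  match u with
  | g1 :: ((g2 :: _) as u') => greedy2 S g1 g2 /\ greedy S u'
  | _ => True
  end.

Definition normal (S : E -> Prop) (u : list E) : Prop :=
  greedy S u /\ Forall (sharp S) u.

Definition garside_family (S : E -> Prop) : Prop :=
  forall g, exists u, path_from (src g) u /\ normal S u /\ g = eval (src g) u.

Definition left_disjoint (f g : E) : Prop :=
  src f = src g /\
  forall h h', tgt h' = src f ->
    lprefix h (mul h' f) -> lprefix h (mul h' g) -> lprefix h h'.

(* ū | v symmetric S-normal, u and v S-normal paths with common source x *)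
Definition sym_normal (S : E -> Prop) (x : Ob C) (u v : list E) : Prop :=
  path_from x u /\ path_from x v /\ normal S u /\ normal S v /\
  forall a u' b v', u = a :: u' -> v = b :: v' -> left_disjoint a b.

Definition bowtie (f g f' g' : E) : Prop :=
  exists h h', tgt h = src f /\ tgt h' = src f' /\
    mul h f = mul h' f' /\ mul h g = mul h' g'.

Definition common_right_multiple (f g : E) : Prop :=
  exists f' g', tgt f = src f' /\ tgt g = src g' /\ mul f f' = mul g g'.

Definition common_left_multiple (h f g : E) : Prop :=
  left_multiple h f /\ left_multiple h g.

Definition weak_left_lcm (f g h : E) : Prop :=
  tgt f = tgt g /\ common_left_multiple h f g /\
  forall h1, common_left_multiple h1 f g ->
    (exists h2, common_left_multiple h2 h1 h) -> left_multiple h1 h.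

Definition cond_weak_left_lcms : Prop :=
  forall f g h0, common_left_multiple h0 f g ->
    exists h, weak_left_lcm f g h /\ left_multiple h0 h.

End Defs.

Arguments cancellative : clear implicits.

(* Main.v *)
Require Import Defs.
From Stdlib Require Import List.
Import ListNotations.

Lemma src_eval (C : category) x u : path_from C x u -> src (eval C x u) = x.
Proof.
  revert x; induction u as [|a u IH]; simpl; intros x H.
  - apply src_one.
  - destruct H as [H1 H2]. rewrite src_mul; auto. rewrite (IH _ H2). reflexivity.
Qed.

Lemma greedy_head (C : category) (S : El C -> Prop) t u : forall x s1 h,
  path_from C x (s1 :: u) -> greedy C S (s1 :: u) -> S t -> tgt h = x ->
  lprefix C t (mul h (eval C x (s1 :: u))) -> lprefix C t (mul h s1).
Proof.
  induction u as [|s2 u IH]; intros x s1 h Hp Hg Ht Hh Hl; simpl in *.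
  - rewrite mul_one in Hl. exact Hl.
  - destruct Hp as [Hs1 [Hs2 Hp]]. destruct Hg as [Hg1 Hg2].
    apply (Hg1 t h Ht); [congruence|].
    assert (E : mul h (mul s1 (mul s2 (eval C (tgt s2) u)))
              = mul (mul h s1) (mul s2 (eval C (tgt s2) u))).
    { rewrite mulA; auto; [congruence|].
      rewrite src_mul; auto. rewrite src_eval; auto. }
    rewrite E in Hl.
    apply (IH (tgt s1) s2 (mul h s1)); simpl; auto.
    + rewrite tgt_mul; congruence.
Qed.

Lemma ld_from_S (C : category) (HC : cancellative C) (S : El C -> Prop)
  (HS : garside_family C S) f g :
  src f = src g ->
  (forall h s, tgt h = src f -> S s -> lprefix C s (mul h f) ->
     lprefix C s (mul h g) -> lprefix C s h) ->
  left_disjoint C f g.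
Proof.
  intros Hsrc HP.
  assert (Hsh : forall h s, tgt h = src f -> sharp C S s -> lprefix C s (mul h f) ->
     lprefix C s (mul h g) -> lprefix C s h).
  { intros h s Hh [[t [e [St [[e' [Ie1 [Ie2 [Ie3 Ie4]]]] [Hte Hs]]]]] | [e' [Ie1 [Ie2 [Ie3 Ie4]]]]] H1 H2.
    - subst s.
      assert (Hpre : forall X, lprefix C (mul t e) X -> lprefix C t X).
      { intros X [y [Hy1 Hy2]]. exists (mul e y). split.
        + rewrite src_mul; auto. rewrite tgt_mul in Hy1; auto.
        + rewrite Hy2. apply mulA; auto. rewrite tgt_mul in Hy1; auto. }
      destruct (HP h t Hh St (Hpre _ H1) (Hpre _ H2)) as [z [Hz1 Hz2]].
      exists (mul e' z). split.
      + rewrite tgt_mul; auto. rewrite src_mul; auto. congruence.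
      + assert (Tz : tgt e' = src z) by congruence.
        rewrite (mulA _ t e (mul e' z)); auto; [|rewrite src_mul; auto].
        rewrite <- (mulA _ e e' z); auto.
        rewrite Ie3. rewrite <- Hte. rewrite Hz1. rewrite one_mul. exact Hz2.
    - destruct H1 as [y [Hy1 Hy2]].
      assert (Hsh : src h = src s).
      { assert (src (mul h f) = src h) by (rewrite src_mul; auto).
        rewrite Hy2 in H. rewrite src_mul in H; auto; congruence. }
      exists (mul e' h). split.
      + rewrite src_mul; auto; congruence.
      + rewrite <- mulA; auto; [|congruence]. rewrite Ie3. rewrite <- Hsh.
        rewrite one_mul. reflexivity. }
  assert (Main : forall w x, path_from C x w -> Forall (sharp C S) w ->
     forall h, tgt h = src f -> lprefix C (eval C x w) (mul h f) ->
     lprefix C (eval C x w) (mul h g) -> lprefix C (eval C x w) h).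
  { induction w as [|s w IH]; intros x Hp Hf h Hh H1 H2; simpl in *.
    - destruct H1 as [y [Hy1 Hy2]]. exists h. split.
      + assert (src (mul h f) = src h) by (rewrite src_mul; auto).
        rewrite Hy2 in H. rewrite src_mul in H; auto. rewrite src_one in H.
        rewrite tgt_one. congruence.
      + assert (src (mul h f) = src h) by (rewrite src_mul; auto).
        rewrite Hy2 in H. rewrite src_mul in H; auto. rewrite src_one in H.
        rewrite H. rewrite one_mul. reflexivity.
    - destruct Hp as [Hs Hp]. inversion Hf as [|? ? Hsh1 Hf']; subst.
      set (E := eval C (tgt s) w) in *.
      assert (HsE : src E = tgt s) by (apply src_eval; auto).
      assert (Hext : forall X, lprefix C (mul s E) X ->
                exists k, tgt E = src k /\ X = mul s (mul E k)).
      { intros X [k [Hk1 Hk2]]. exists k. split.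
        - rewrite tgt_mul in Hk1; auto.
        - rewrite Hk2. apply mulA; auto. rewrite tgt_mul in Hk1; auto. }
      destruct (Hext _ H1) as [k1 [Hk1 Ek1]].
      destruct (Hext _ H2) as [k2 [Hk2 Ek2]].
      assert (Hsm : forall k, tgt E = src k -> tgt s = src (mul E k)).
      { intros k Hk. rewrite src_mul; auto. }
      destruct (Hsh h s Hh Hsh1) as [h1 [Hh1 Eh1]].
      { exists (mul E k1). auto. }
      { exists (mul E k2). auto. }
      assert (Hth1 : tgt h1 = src f).
      { rewrite <- Hh. rewrite Eh1. rewrite tgt_mul; auto. }
      assert (Hc : forall X k, tgt h1 = src X -> tgt E = src k ->
                 mul h X = mul s (mul E k) -> lprefix C E (mul h1 X)).
      { intros X k HX Hk EX. exists k. split; auto. symmetry.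
        apply (proj1 HC s); auto.
        - rewrite src_mul; auto.
        - rewrite <- EX. rewrite Eh1. apply mulA; auto. }
      destruct (IH (tgt s) Hp Hf' h1 Hth1) as [m [Hm1 Hm2]].
      { apply (Hc f k1); auto. }
      { apply (Hc g k2); auto. congruence. }
      exists m. split.
      + rewrite tgt_mul; auto.
      + rewrite Eh1. rewrite Hm2. symmetry. apply mulA; auto. }
  split; auto.
  intros c h Hh H1 H2.
  destruct (HS c) as [w [Hp [[_ Hf] He]]].
  set (x := src c) in *. rewrite He. apply (Main w x); auto; rewrite <- He; auto.
Qed.

Lemma sym_ld (C : category) (HC : cancellative C) (S : El C -> Prop)
  (HS : garside_family C S) x u v :
  sym_normal C S x u v -> left_disjoint C (eval C x u) (eval C x v).
Proof.
  intros [Hpu [Hpv [[Hgu _] [[Hgv _] Hld]]]].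
  apply (ld_from_S C HC S HS).
  { rewrite !src_eval; auto. }
  intros h s Hh Ss H1 H2. rewrite src_eval in Hh; auto.
  destruct u as [|a u'].
  { simpl in H1. rewrite <- Hh in H1. rewrite mul_one in H1. exact H1. }
  destruct v as [|b v'].
  { simpl in H2. rewrite <- Hh in H2. rewrite mul_one in H2. exact H2. }
  pose proof (greedy_head C S s u' x a h Hpu Hgu Ss Hh H1) as Ha.
  pose proof (greedy_head C S s v' x b h Hpv Hgv Ss Hh H2) as Hb.
  destruct (Hld a u' b v' eq_refl eq_refl) as [_ L].
  apply (L s h); auto. destruct Hpu. congruence.
Qed.

Lemma prefix_ext (C : category) c h s a' :
  lprefix C c (mul h s) -> tgt h = src s -> tgt s = src a' ->
  lprefix C c (mul h (mul s a')).
Proof.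
  intros [k [Hk1 Hk2]] Hh Hs. exists (mul k a'). split.
  - rewrite src_mul; auto.
    assert (tgt (mul h s) = tgt s) by (rewrite tgt_mul; auto).
    rewrite Hk2 in H. rewrite tgt_mul in H; auto. congruence.
  - rewrite <- mulA; auto. rewrite Hk2. apply mulA; auto.
    assert (tgt (mul h s) = tgt s) by (rewrite tgt_mul; auto).
    rewrite Hk2 in H. rewrite tgt_mul in H; auto. congruence.
Qed.

Lemma ld_prefix (C : category) a b s1 a' t1 b' :
  left_disjoint C a b -> a = mul s1 a' -> tgt s1 = src a' ->
  b = mul t1 b' -> tgt t1 = src b' -> left_disjoint C s1 t1.
Proof.
  intros [Hs L] Ea Ha Eb Hb. subst a b.
  rewrite !src_mul in Hs; auto.
  split; auto. intros c h Hh H1 H2.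
  apply (L c h).
  - rewrite src_mul; auto.
  - apply prefix_ext; auto.
  - apply prefix_ext; auto. congruence.
Qed.

Theorem mainTheorem4 (C : category) (HC : cancellative C)
  (S : El C -> Prop) (HS : garside_family C S) :
  (forall f g : El C, common_right_multiple C f g ->
     exists (x : Ob C) (u v : list (El C)),
       sym_normal C S x u v /\ bowtie C f g (eval C x u) (eval C x v))
  <-> cond_weak_left_lcms C.
Proof.
  destruct HC as [LC RC].
  split.
  -
    intros H f g h0 [[p [Hp1 Hp2]] [q [Hq1 Hq2]]].
    assert (Hpq : src p = src q).
    { assert (E1 : src (mul p f) = src p) by (rewrite src_mul; auto).
      assert (E2 : src (mul q g) = src q) by (rewrite src_mul; auto).
      congruence. }
    assert (Hfg : tgt f = tgt g).
    { assert (E1 : tgt (mul p f) = tgt f) by (rewrite tgt_mul; auto).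
      assert (E2 : tgt (mul q g) = tgt g) by (rewrite tgt_mul; auto).
      congruence. }
    destruct (H p q) as [x [u [v [Hsym [hh [h' [T1 [T2 [B1 B2]]]]]]]]].
    { exists f, g. repeat split; auto. congruence. }
    pose proof (sym_ld C (conj LC RC) S HS x u v Hsym) as LD.
    destruct Hsym as [Hpu [Hpv _]].
    set (a := eval C x u) in *. set (b := eval C x v) in *.
    assert (Sa : src a = x) by (apply src_eval; auto).
    assert (Sb : src b = x) by (apply src_eval; auto).
    assert (Ta : tgt a = tgt p).
    { assert (E1 : tgt (mul h' a) = tgt a) by (rewrite tgt_mul; auto).
      assert (E2 : tgt (mul hh p) = tgt p) by (rewrite tgt_mul; auto).
      congruence. }
    assert (Tb : tgt b = tgt q).
    { assert (E1 : tgt (mul h' b) = tgt b) by (rewrite tgt_mul; auto; congruence).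
      assert (E2 : tgt (mul hh q) = tgt q) by (rewrite tgt_mul; auto; congruence).
      congruence. }
    assert (Eab : mul a f = mul b g).
    { apply (LC h'); auto.
      - rewrite src_mul; auto. congruence.
      - rewrite src_mul; auto; congruence.
      - rewrite <- !mulA; auto; try congruence.
        rewrite <- B1, <- B2. rewrite !mulA; auto; congruence. }
    destruct (proj2 LD hh h') as [k [Hk1 Hk2]]; auto.
    { exists p. auto. }
    { exists q. split; auto. congruence. }
    assert (Tk : tgt k = src a).
    { assert (E1 : tgt (mul hh k) = tgt k) by (rewrite tgt_mul; auto).
      congruence. }
    assert (Ep : p = mul k a).
    { apply (LC hh); auto.
      - rewrite src_mul; auto.
      - rewrite B1, Hk2. apply mulA; auto. }
    exists (mul a f). split.
    + split; auto. split.
      * split; [exists a; split; auto; congruence|exists b; split; auto; congruence].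
      * intros h1 [[a1 [Ha1 Ea1]] [b1 [Hb1 Eb1]]] [h2 [[c [Hc1 Ec]] [d [Hd1 Ed]]]].
        assert (Tc1 : tgt c = src a1).
        { rewrite Hc1, Ea1. rewrite src_mul; auto. }
        assert (Tc2 : tgt c = src b1).
        { rewrite Hc1, Eb1. rewrite src_mul; auto. }
        assert (Td : tgt d = src a).
        { rewrite Hd1. rewrite src_mul; auto. congruence. }
        assert (E1 : mul c a1 = mul d a).
        { apply (RC f); auto.
          - rewrite tgt_mul; auto.
          - rewrite tgt_mul; auto. congruence.
          - rewrite !mulA; auto; try congruence. }
        assert (E2 : mul c b1 = mul d b).
        { apply (RC g); auto.
          - rewrite tgt_mul; auto.
          - rewrite tgt_mul; auto; congruence.
          - rewrite !mulA; auto; try congruence. }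
        destruct (proj2 LD c d) as [e [He1 He2]]; auto.
        { exists a1. auto. }
        { exists b1. auto. }
        exists e. split.
        -- rewrite src_mul; [|congruence].
           assert (E3 : tgt (mul c e) = tgt e) by (rewrite tgt_mul; auto). congruence.
        -- assert (Te : tgt e = src a).
           { assert (E3 : tgt (mul c e) = tgt e) by (rewrite tgt_mul; auto). congruence. }
           assert (a1 = mul e a).
           { apply (LC c); auto.
             - rewrite src_mul; auto.
             - rewrite E1, He2. apply mulA; auto. }
           rewrite Ea1, H0. apply mulA; auto. congruence.
    + exists k. split.
      * rewrite src_mul; auto. congruence.
      * rewrite Hp2, Ep. apply mulA; auto. congruence.
  -
    intros H f g [f' [g' [E1 [E2 E3]]]].
    assert (Hfg : src f = src g).
    { assert (A1 : src (mul f f') = src f) by (rewrite src_mul; auto).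
      assert (A2 : src (mul g g') = src g) by (rewrite src_mul; auto).
      congruence. }
    destruct (H f' g' (mul f f')) as [h [[Htt [[[a [Ha1 Ha2]] [b [Hb1 Hb2]]] Hw]] [k [Hk1 Hk2]]]].
    { split; [exists f; auto | exists g; auto]. }
    assert (Sab : src a = src b).
    { assert (A1 : src (mul a f') = src a) by (rewrite src_mul; auto).
      assert (A2 : src (mul b g') = src b) by (rewrite src_mul; auto).
      congruence. }
    assert (Tk : tgt k = src a).
    { rewrite Hk1, Ha2. rewrite src_mul; auto. }
    assert (Ef : f = mul k a).
    { apply (RC f'); auto.
      - rewrite tgt_mul; auto.
      - rewrite mulA; auto. rewrite <- Ha2. exact Hk2. }
    assert (Eg : g = mul k b).
    { apply (RC g'); auto.
      - rewrite tgt_mul; auto. congruence.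
      - rewrite mulA; auto; [|congruence]. rewrite <- Hb2. congruence. }
    assert (LD : left_disjoint C a b).
    { split; auto. intros c h' Hh' [a1 [Ha1' Ea1]] [b1 [Hb1' Eb1]].
      assert (Ta1 : tgt a1 = src f').
      { assert (A1 : tgt (mul h' a) = tgt a) by (rewrite tgt_mul; auto).
        rewrite Ea1 in A1. rewrite tgt_mul in A1; auto. congruence. }
      assert (Tb1 : tgt b1 = src g').
      { assert (A1 : tgt (mul h' b) = tgt b) by (rewrite tgt_mul; auto; congruence).
        rewrite Eb1 in A1. rewrite tgt_mul in A1; auto. congruence. }
      assert (Eq1 : mul a1 f' = mul b1 g').
      { apply (LC c).
        - rewrite src_mul; auto.
        - rewrite src_mul; auto.
        - rewrite <- !mulA; auto. rewrite <- Ea1, <- Eb1.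
          rewrite !mulA; auto; try congruence. }
      destruct (Hw (mul a1 f')) as [d [Hd1 Ed]].
      { split; [exists a1; auto | exists b1; auto]. }
      { exists (mul h' h). split.
        - exists c. split; [rewrite src_mul; auto|].
          rewrite <- (mulA _ c a1 f'); auto.
          rewrite <- Ea1. rewrite Ha2. symmetry. apply mulA; auto.
        - exists h'. split; auto. rewrite Ha2, src_mul; auto. }
      assert (Td : tgt d = src a) by (rewrite Hd1, Ha2, src_mul; auto).
      assert (Ea1d : a1 = mul d a).
      { apply (RC f'); auto.
        - rewrite tgt_mul; auto.
        - rewrite Ed, Ha2. symmetry. apply mulA; auto. }
      assert (Tcd : tgt c = src d).
      { rewrite Ha1', Ea1d, src_mul; auto. }
      exists d. split; auto.
      apply (RC a); auto.
      - rewrite tgt_mul; auto.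
      - rewrite Ea1, Ea1d. symmetry. apply mulA; auto. }
    destruct (HS a) as [u [Hpu [Hnu Eu]]].
    destruct (HS b) as [v [Hpv [Hnv Ev]]].
    exists (src a), u, v. split.
    + split; [auto|]. split; [rewrite Sab; auto|]. split; [auto|]. split; [auto|].
      * intros s1 u' t1 v' -> ->.
        destruct Hpu as [Hs1 Hpu']. destruct Hpv as [Ht1 Hpv'].
        apply (ld_prefix C a b s1 (eval C (tgt s1) u') t1 (eval C (tgt t1) v')); auto.
        -- symmetry. apply src_eval; auto.
        -- symmetry. apply src_eval; auto.
    + exists (one (src f)), k. split; [apply tgt_one|]. split.
      { rewrite <- Eu. auto. }
      split.
      * rewrite one_mul. rewrite <- Eu. exact Ef.
      * rewrite Hfg, one_mul. rewrite Sab, <- Ev. exact Eg.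
Qed.
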